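(* Let $d\ge1$, $0<s_0<s_1$, $0<\alpha_0<\alpha_1$, $W=[s_0,s_1]\times[\alpha_0,\alpha_1]$ with interior $W^\circ$, let $g\in L^2_0(\mathbb{T}^d;\mathbb{C})$ and $u_d\in L^2(\mathbb{T}^d;\mathbb{C})$ with Fourier coefficient sequences $\widehat{\mathbf G}=(\hat g_k)_k$, $\widehat{\mathbf U}_d=(\hat u_{d,k})_k$. Let $\varphi\in C^2(W^\circ,\mathbb{R})$ be non-negative and convex with $\varphi(s,\alpha)\to\infty$ whenever $s\to s_0$, $s\to s_1$, $\alpha\to\alpha_0$ or $\alpha\to\alpha_1$. Define $\mathcal{S}(s,\alpha)=\big(\frac{\alpha}{\alpha+|k|^{2s}}\hat g_k\big)_{k\in\mathbb{Z}^d}$ and $$j(s,\alpha)=\frac{1}{2(2\pi)^d}\|\mathcal{S}(s,\alpha)-\widehat{\mathbf U}_d\|_{\ell^2}^2+\varphi(s,\alpha),\quad (s,\alpha)\in W^\circ.$$ Then there exists $(\bar s,\bar\alpha)\in W^\circ$ with $j(\bar s,\bar\alpha)\le j(s,\alpha)$ for all $(s,\alpha)\in W^\circ$ (i.e. an optimal triple $(\bar s,\bar\alpha,\mathcal{S}(\bar s,\bar\alpha))$ exists), and the function with Fourier coefficients $\mathcal{S}(\bar s,\bar\alpha)$ lies in $H^{2\bar s}_0(\mathbb{T}^d;\mathbb{C})$.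
   Context: $\mathbb{T}^d=\mathbb{R}^d/(2\pi\mathbb{Z})^d$; $\hat u_k=\int_{\mathbb{T}^d}u\,e^{-ik\cdot x}dx$; convention $|0|^{2s}=0$. $L^2_0$ is the zero-mean subspace of $L^2$. For $\sigma\ge0$, $H^\sigma_0(\mathbb{T}^d;\mathbb{C})=\{u\in L^2_0:\sum_{k\ne0}|k|^{2\sigma}|\hat u_k|^2<\infty\}$. $\mathcal{S}(s,\alpha)$ is the Fourier coefficient sequence of the solution $u$ of $(-\Delta)^su+\alpha u=\alpha g$, where $(-\Delta)^s u=(2\pi)^{-d}\sum_k|k|^{2s}\hat u_k e^{ik\cdot x}$. *)

(* Defs.v *)
From HB Require Import structures.
From mathcomp Require Import all_boot all_order all_algebra.
From mathcomp Require Export complex.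
From mathcomp Require Import all_classical all_reals all_analysis.
Set Implicit Arguments. Unset Strict Implicit. Unset Printing Implicit Defensive.
Import Order.TTheory GRing.Theory Num.Theory.
Import numFieldNormedType.Exports.
Local Open Scope classical_set_scope.
Local Open Scope ring_scope.

Section Defs.
Variable R : realType.

Definition freq (d : nat) := 'rV[int]_d.

Definition knorm2 (d : nat) (k : freq d) : R := \sum_(i < d) ((k ord0 i)%:~R) ^+ 2.

(* |k|^(2 s) with the convention |0|^(2s) = 0 *)
Definition kpow (d : nat) (k : freq d) (s : R) : R :=
  if k == 0 then 0 else powR (knorm2 k) s.

Definition sqmod (z : R[i]) : R := (complex.Re z) ^+ 2 + (complex.Im z) ^+ 2.

Definition l2norm2 (d : nat) (c : freq d -> R[i]) : \bar R :=
  (\esum_(k in [set: freq d]) (sqmod (c k))%:E)%E.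

(* c is the Fourier coefficient sequence of an L^2 function (Parseval) *)
Definition is_L2 (d : nat) (c : freq d -> R[i]) : Prop := (l2norm2 c < +oo)%E.

(* ... of an L^2_0 (zero-mean) function *)
Definition is_L2_0 (d : nat) (c : freq d -> R[i]) : Prop := is_L2 c /\ c 0 = 0.

(* ... of a function in H^sigma_0(T^d; C) *)
Definition is_H0 (d : nat) (sigma : R) (c : freq d -> R[i]) : Prop :=
  is_L2_0 c /\
  (\esum_(k in [set: freq d]) (kpow k sigma * sqmod (c k))%:E < +oo)%E.

Definition Ssol (d : nat) (g : freq d -> R[i]) (s alpha : R) : freq d -> R[i] :=
  fun k => ((alpha / (alpha + kpow k s))%:C * g k)%C.

Definition Wint (s0 s1 a0 a1 : R) : set (R * R) :=
  [set x | s0 < x.1 < s1 /\ a0 < x.2 < a1].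

Definition e1 : R * R := (1, 0).
Definition e2 : R * R := (0, 1).

(* C^2 on an open set U of R^2: all partial derivatives of order <= 2
   exist on U and those of order 2 are continuous on U (hence f is C^2). *)
Definition C2_on (U : set (R * R)) (f : R * R -> R) : Prop :=
  forall v w, v \in [:: e1; e2] -> w \in [:: e1; e2] ->
    (forall x, U x -> derivable f x v) /\
    (forall x, U x -> derivable ('D_v f) x w) /\
    (forall x, U x -> {for x, continuous ('D_w ('D_v f))}).

Definition convex_on (U : set (R * R)) (f : R * R -> R) : Prop :=
  forall x y (t : R), U x -> U y -> 0 <= t <= 1 ->
    f (t *: x + (1 - t) *: y) <= t * f x + (1 - t) * f y.

Definition blowup_at_boundary (s0 s1 a0 a1 : R) (f : R * R -> R) : Prop :=
  forall M : R, exists2 delta : R, 0 < delta &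
    forall x, Wint s0 s1 a0 a1 x ->
      (x.1 < s0 + delta \/ s1 - delta < x.1 \/ x.2 < a0 + delta \/ a1 - delta < x.2) ->
      M <= f x.

Definition jfun (d : nat) (g ud : freq d -> R[i]) (phi : R * R -> R) (x : R * R)
  : \bar R :=
  ((2 * (2 * pi) ^+ d)^-1%:E * l2norm2 (fun k => (Ssol g x.1 x.2 k - ud k)%R)
   + (phi x)%:E)%E.

End Defs.

(* Main.v *)
Require Import Defs.
From HB Require Import structures.
From mathcomp Require Import all_boot all_order all_algebra.
From mathcomp Require Import complex.
From mathcomp Require Import all_classical all_reals all_analysis.
From mathcomp Require Import ring lra.
Import Order.TTheory GRing.Theory Num.Theory.
Import numFieldNormedType.Exports.
Local Open Scope classical_set_scope.
Local Open Scope ring_scope.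
Set Implicit Arguments. Unset Strict Implicit. Unset Printing Implicit Defensive.
Section S.
Variable R : realType.
Lemma sqmod_ge0 (z : R[i]) : 0 <= sqmod z.
Proof. rewrite /sqmod; nra. Qed.
Lemma sqmod_sub (z w : R[i]) : sqmod (z - w) <= 2 * sqmod z + 2 * sqmod w.
Proof. case: z => x y; case: w => u v; rewrite /sqmod /=.
have := sqr_ge0 (x+u); have := sqr_ge0 (y+v); nra. Qed.
Lemma kpow_ge0 d (k : freq d) (s : R) : 0 <= kpow k s.
Proof. rewrite /kpow; case: ifP => _ //; exact: powR_ge0. Qed.
Lemma coef_ge0 d (k : freq d) (s a : R) : 0 < a -> 0 <= a / (a + kpow k s).
Proof. move=> a0; have := kpow_ge0 k s => h; apply: divr_ge0; lra. Qed.
Lemma coef_le1 d (k : freq d) (s a : R) : 0 < a -> a / (a + kpow k s) <= 1.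
Proof. move=> a0; have := kpow_ge0 k s => h; rewrite ler_pdivrMr; lra. Qed.
Lemma sqmod_Ssol d (g : freq d -> R[i]) s a k :
  sqmod (Ssol g s a k) = (a / (a + kpow k s)) ^+ 2 * sqmod (g k).
Proof. rewrite /sqmod /Ssol; case: (g k) => x y /=; ring. Qed.
Lemma sqmod_Ssol_sub d (g ud : freq d -> R[i]) s a k :
  sqmod (Ssol g s a k - ud k) = (a / (a + kpow k s) * complex.Re (g k) - complex.Re (ud k)) ^+ 2
    + (a / (a + kpow k s) * complex.Im (g k) - complex.Im (ud k)) ^+ 2.
Proof. rewrite /sqmod /Ssol; case: (g k) => x y; case: (ud k) => u v /=; ring. Qed.
Lemma sqmod_Ssol_le d (g : freq d -> R[i]) s a k : 0 < a ->
  sqmod (Ssol g s a k) <= sqmod (g k).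
Proof. move=> a0; rewrite sqmod_Ssol; have := coef_ge0 k s a0; have := coef_le1 k s a0.
have := sqmod_ge0 (g k); set c := a / _ => h1 h2 h3.
apply: ler_piMl => //; rewrite expr2; nra. Qed.

Local Open Scope ereal_scope.
Lemma esumZ_le (T : choiceType) (c : R) (f : T -> R) : (0 <= c)%R -> (forall k, 0 <= f k)%R ->
 \esum_(k in [set: T]) (c * f k)%:E <= c%:E * \esum_(k in [set: T]) (f k)%:E.
Proof.
move=> c0 f0; apply: ge_ereal_sup => _ [A [finA _] <-].
rewrite fsumEFin// (_ : (\sum_(i \in A) (c * f i))%R = c * \sum_(i \in A) f i)%R; last first.
  by rewrite !fsbig_finite// mulr_sumr.
rewrite EFinM; apply: lee_wpmul2l; first by rewrite lee_fin.
rewrite -fsumEFin//; apply: ereal_sup_ubound; exists A => //.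
Qed.
Lemma esumZ_lt (T : choiceType) (c : R) (f : T -> R) : (0 <= c)%R -> (forall k, 0 <= f k)%R ->
 \esum_(k in [set: T]) (f k)%:E < +oo -> \esum_(k in [set: T]) (c * f k)%:E < +oo.
Proof. move=> c0 f0 h; apply: le_lt_trans (esumZ_le c0 f0) _; rewrite lte_mul_pinfty//. Qed.

Lemma L2_sub d (g ud : freq d -> R[i]) s a : (0 < a)%R -> is_L2 g -> is_L2 ud ->
  is_L2 (fun k => Ssol g s a k - ud k)%R.
Proof.
move=> a0 hg hud; rewrite /is_L2 /l2norm2.
apply: (le_lt_trans (le_esum (b := fun k => (2 * sqmod (g k))%:E + (2 * sqmod (ud k))%:E) _)).
  move=> k _; rewrite -EFinD lee_fin; apply: le_trans (sqmod_sub _ _) _.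
  by have := sqmod_Ssol_le g s k a0; lra.
rewrite esumD; last 2 first.
- by move=> k _; rewrite lee_fin; have := sqmod_ge0 (g k); lra.
- by move=> k _; rewrite lee_fin; have := sqmod_ge0 (ud k); lra.
by apply: lte_add_pinfty; apply: esumZ_lt => // k; exact: sqmod_ge0.
Qed.
End S.
Lemma kpow2 (R : realType) d (k : freq d) (s : R) : kpow k (2 * s) = kpow k s ^+ 2.
Proof.
rewrite /kpow; case: ifP => _; first by rewrite expr0n.
by rewrite mulrC powRrM powR_mulrn// powR_ge0.
Qed.
Lemma coef_H (R : realType) d (k : freq d) (s a : R) : 0 < a ->
  kpow k (2 * s) * (a / (a + kpow k s)) ^+ 2 <= a ^+ 2.
Proof.
move=> a0; rewrite kpow2 -exprMn; have p0 := kpow_ge0 k s.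
have q0 : 0 <= kpow k s * (a / (a + kpow k s)) by apply: mulr_ge0 => //; exact: coef_ge0.
have qa : kpow k s * (a / (a + kpow k s)) <= a.
  rewrite mulrA ler_pdivrMr; last lra. nra.
rewrite !expr2; nra.
Qed.
Lemma H0_Ssol (R : realType) d (g : freq d -> R[i]) (s a : R) : 0 < a -> is_L2_0 g ->
  is_H0 (2 * s) (Ssol g s a).
Proof.
move=> a0 [hg g0]; split; first split.
- rewrite /is_L2 /l2norm2; apply: le_lt_trans hg; apply: le_esum => k _.
  by rewrite lee_fin sqmod_Ssol_le.
- by rewrite /Ssol g0 mulr0.
apply: le_lt_trans (esumZ_lt (c := a ^+ 2) _ _ hg); last 2 first.
- exact: sqr_ge0.
- by move=> k; exact: sqmod_ge0.
- apply: le_esum => k _; rewrite lee_fin sqmod_Ssol mulrA.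
  by apply: ler_wpM2r; [exact: sqmod_ge0 | exact: coef_H].
Qed.
Lemma kpow_cont (R : realType) d (k : freq d) (s : R) : 0 < s -> {for s, continuous (fun t : R => kpow k t)}.
Proof.
move=> s0; rewrite /kpow; case: (k == 0); first exact: cvg_cst.
rewrite /powR; case: (knorm2 R k == 0).
  apply: cvg_near_cst; near=> t.
  have -> : (s == 0) = false by rewrite gt_eqF.
  have -> : (t == 0) = false by rewrite gt_eqF//; near: t; exact: lt_nbhsr.
  by [].
apply: continuous_comp; last exact: continuous_expR.
by apply: cvgMr_tmp; exact: cvg_id.
Unshelve. all: by end_near.
Qed.
Lemma coef_cont (R : realType) d (k : freq d) (x : R * R) : 0 < x.1 -> 0 < x.2 ->
  {for x, continuous (fun y : R * R => y.2 / (y.2 + kpow k y.1))}.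
Proof.
move=> x1 x2.
have h1 : (fun y : R * R => y.1) @ x --> x.1 by apply: cvg_fst.
have h2 : (fun y : R * R => y.2) @ x --> x.2 by apply: cvg_snd.
have hk : (fun y : R * R => kpow k y.1) @ x --> kpow k x.1.
  have := continuous_cvg _ (@kpow_cont _ _ k _ x1) h1. move=> HH. exact: HH.
apply: cvgM => //; apply: cvgV; last exact: cvgD.
by have := kpow_ge0 k x.1 => h; rewrite gt_eqF//; lra.
Qed.
Lemma term_cont (R : realType) d (g ud : freq d -> R[i]) k (x : R * R) : 0 < x.1 -> 0 < x.2 ->
  {for x, continuous (fun y : R * R => sqmod (Ssol g y.1 y.2 k - ud k))}.
Proof.
move=> x1 x2.
have hc := @coef_cont _ _ k _ x1 x2.
rewrite (_ : (fun y : R * R => _) = fun y => 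
   ((y.2 / (y.2 + kpow k y.1)) * complex.Re (g k) - complex.Re (ud k)) *
   ((y.2 / (y.2 + kpow k y.1)) * complex.Re (g k) - complex.Re (ud k)) +
   ((y.2 / (y.2 + kpow k y.1)) * complex.Im (g k) - complex.Im (ud k)) *
   ((y.2 / (y.2 + kpow k y.1)) * complex.Im (g k) - complex.Im (ud k))); last first.
  by apply: funext => y; rewrite sqmod_Ssol_sub !expr2.
rewrite /=.
by apply: cvgD; apply: cvgM; apply: cvgB; (try exact: cvg_cst); apply: cvgMr_tmp.
Qed.
Lemma pair_comb (R : realType) (t a b c d : R) : t *: ((a, b) : R * R) + (1 - t) *: (c, d) = (t * a + (1 - t) * c, t * b + (1 - t) * d).
Proof. by []. Qed.
Lemma ball_prod_test (R : realType) (x : R * R) (P : set (R * R)) (e : R) : 0 < e ->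
  (forall y : R * R, `|x.1 - y.1| < e -> `|x.2 - y.2| < e -> P y) -> \forall y \near x, P y.
Proof.
move=> e0 H; apply/nbhs_ballP; exists e => //= y [/= h1 h2].
by apply: H; [move: h1 | move: h2]; rewrite -ball_normE.
Qed.
Lemma seg_bound (R : realType) (U : set (R * R)) (phi : R * R -> R) a b z t :
  convex_on U phi -> U a -> U b -> 0 <= t <= 1 -> z = t *: a + (1 - t) *: b ->
  phi z <= Num.max (phi a) (phi b).
Proof.
move=> hc Ua Ub t01 ->; apply: le_trans (hc _ _ _ Ua Ub t01) _.
have h1 : phi a <= Num.max (phi a) (phi b) by rewrite le_max lexx.
have h2 : phi b <= Num.max (phi a) (phi b) by rewrite le_max lexx orbT.
move: t01 => /andP[t0 t1]; nra.
Qed.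

Lemma sq_bound (R : realType) (s0 s1 a0 a1 : R) phi p q r : convex_on (Wint s0 s1 a0 a1) phi ->
  0 < r -> s0 < p - r -> p + r < s1 -> a0 < q - r -> q + r < a1 ->
  forall z : R * R, `|z.1 - p| <= r -> `|z.2 - q| <= r ->
  phi z <= Num.max (Num.max (phi (p - r, q - r)) (phi (p + r, q - r)))
                   (Num.max (phi (p - r, q + r)) (phi (p + r, q + r))).
Proof.
move=> hc r0 h1 h2 h3 h4 [z1 z2] /=; rewrite !ler_norml => /andP[hz1 hz1'] /andP[hz2 hz2'].
have r2 : 2 * r != 0 by rewrite gt_eqF//; lra.
have inW : forall u v, p - r <= u <= p + r -> q - r <= v <= q + r -> Wint s0 s1 a0 a1 (u, v).
  move=> u v /andP[? ?] /andP[? ?]; rewrite /Wint /=; split; apply/andP; split; lra.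
set t := (p + r - z1) / (2 * r).
have t01 : 0 <= t <= 1.
  apply/andP; split; first by apply: divr_ge0; lra.
  by rewrite /t ler_pdivrMr; lra.
have ht : z1 = t * (p - r) + (1 - t) * (p + r) by rewrite /t; field; rewrite gt_eqF.
have A : phi (z1, q - r) <= Num.max (phi (p - r, q - r)) (phi (p + r, q - r)).
  apply: (seg_bound hc _ _ t01); [apply: inW; lra.. |].
  by rewrite pair_comb -ht; congr pair; ring.
have B : phi (z1, q + r) <= Num.max (phi (p - r, q + r)) (phi (p + r, q + r)).
  apply: (seg_bound hc _ _ t01); [apply: inW; lra.. |].
  by rewrite pair_comb -ht; congr pair; ring.
set u := (q + r - z2) / (2 * r).
have u01 : 0 <= u <= 1.
  apply/andP; split; first by apply: divr_ge0; lra.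
  by rewrite /u ler_pdivrMr; lra.
have hu : z2 = u * (q - r) + (1 - u) * (q + r) by rewrite /u; field; rewrite gt_eqF.
have C : phi (z1, z2) <= Num.max (phi (z1, q - r)) (phi (z1, q + r)).
  apply: (seg_bound hc _ _ u01); [apply: inW; lra.. |].
  by rewrite pair_comb -hu; congr pair; ring.
apply: (le_trans C); rewrite ge_max; apply/andP; split.
  by apply: (le_trans A); rewrite le_max lexx.
by apply: (le_trans B); rewrite le_max lexx orbT.
Qed.
Lemma convex_lsc (R : realType) (s0 s1 a0 a1 : R) phi (x : R * R) (e : R) :
  convex_on (Wint s0 s1 a0 a1) phi -> (forall x, Wint s0 s1 a0 a1 x -> 0 <= phi x) ->
  Wint s0 s1 a0 a1 x -> 0 < e -> \forall y \near x, phi x - e < phi y.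
Proof.
move=> hc h0; case: x => p q; rewrite {1}/Wint /= => -[/andP[hp1 hp2] /andP[hq1 hq2]] e0.
have [r [r0 hr1 hr2 hr3 hr4]] : exists r, [/\ 0 < r, s0 < p - r, p + r < s1, a0 < q - r & q + r < a1].
  pose m := Num.min (Num.min (p - s0) (s1 - p)) (Num.min (q - a0) (a1 - q)).
  exists (m / 2).
  have m0 : 0 < m.
    by rewrite /m !lt_min !subr_gt0 hp1 hp2 hq1 hq2.
  have m1 : m <= p - s0 by rewrite !ge_min lexx.
  have m2 : m <= s1 - p by rewrite !ge_min lexx orbT.
  have m3 : m <= q - a0 by rewrite !ge_min lexx !orbT.
  have m4 : m <= a1 - q by rewrite !ge_min lexx !orbT.
  split; lra.
have inW : forall u v, p - r <= u <= p + r -> q - r <= v <= q + r -> Wint s0 s1 a0 a1 (u, v).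
  move=> u v /andP[? ?] /andP[? ?]; rewrite /Wint /=; split; apply/andP; split; lra.
set M := Num.max (Num.max (phi (p - r, q - r)) (phi (p + r, q - r)))
                   (Num.max (phi (p - r, q + r)) (phi (p + r, q + r))).
have hM := sq_bound hc r0 hr1 hr2 hr3 hr4.
have M0 : 0 <= M.
  apply: le_trans (hM (p, q) _ _); rewrite /= ?subrr ?normr0; try lra.
  by apply: h0; apply: inW; lra.
set t := Num.min 1 (e / (M + 1)).
have t0 : 0 < t by rewrite lt_min ltr01 /=; apply: divr_gt0; lra.
have t1 : t <= 1 by rewrite ge_min lexx.
have te : t * M < e.
  have : t <= e / (M + 1) by rewrite ge_min lexx orbT.
  rewrite ler_pdivlMr; last lra.
  nra.
apply: (@ball_prod_test _ _ _ (t * r)); first exact: mulr_gt0.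
move=> [y1 y2] /=; rewrite !ltr_norml => /andP[hy1 hy1'] /andP[hy2 hy2'].
have tr : t * r <= r by nra.
have Wy : Wint s0 s1 a0 a1 (y1, y2) by apply: inW; lra.
set w := (((1 + t) * p - y1) / t, ((1 + t) * q - y2) / t).
have tn0 : t != 0 by rewrite gt_eqF.
have hb1 : `|w.1 - p| <= r.
  rewrite /w /= (_ : _ - p = (p - y1) / t); last by field.
  rewrite normrM normfV (gtr0_norm t0) ler_pdivrMr// ler_norml; lra.
have hb2 : `|w.2 - q| <= r.
  rewrite /w /= (_ : _ - q = (q - y2) / t); last by field.
  rewrite normrM normfV (gtr0_norm t0) ler_pdivrMr// ler_norml; lra.
have hw : phi w <= M by apply: hM.
have Ww : Wint s0 s1 a0 a1 w.
  move: hb1 hb2; rewrite !ler_norml => /andP[? ?] /andP[? ?].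
  by apply: (inW w.1 w.2); apply/andP; split; lra.
set l := (1 + t)^-1.
have t1n0 : 1 + t != 0 by rewrite gt_eqF//; lra.
have l01 : 0 <= l <= 1.
  apply/andP; split; first by rewrite invr_ge0; lra.
  by rewrite invf_le1; lra.
have := hc _ _ _ Wy Ww l01.
have -> : l *: (y1, y2) + (1 - l) *: w = (p, q).
  by rewrite /w pair_comb /l; congr pair; field; rewrite tn0 t1n0.
move=> hconv.
have key : (1 + t) * phi (p, q) <= phi (y1, y2) + t * M.
  have := ler_wpM2l (_ : 0 <= 1 + t) hconv; rewrite mulrDr !mulrA.
  rewrite (_ : (1 + t) * l = 1); last by rewrite /l mulfV.
  rewrite (_ : (1 + t) * (1 - l) = t); last by rewrite /l; field.
  by move=> /(_ _) H; apply: le_trans (H _) _; [lra | rewrite mul1r lerD2l ler_wpM2l //; lra].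
have := h0 _ (inW p q _ _); rewrite ?lexx; nra.
Qed.
Lemma sum_lsc (R : realType) (I : Type) (s : seq I) (f : I -> R * R -> R) (x : R * R) :
  (forall k, {for x, continuous (f k)}) -> forall e, 0 < e ->
  \forall y \near x, \sum_(k <- s) f k x - e < \sum_(k <- s) f k y.
Proof.
move=> hf; elim: s => [|k s IH] e e0.
  by near=> y; rewrite !big_nil; lra.
have e2 : 0 < e / 2 by lra.
have := IH _ e2; have := cvgr_dist_lt _ _ (hf k) _ e2 => H1 H2.
near=> y; rewrite !big_cons.
have h1 : `|f k x - f k y| < e / 2 by near: y; exact: H1.
have h2 : \sum_(k <- s) f k x - e / 2 < \sum_(k <- s) f k y by near: y; exact: H2.
move: h1; rewrite ltr_norml => /andP[? ?]; lra.
Unshelve. all: by end_near.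
Qed.
Unset Implicit Arguments.
Theorem theorem3 (R : realType) (d : nat) (hd : (0 < d)%N)
  (s0 s1 a0 a1 : R) (hs0 : 0 < s0) (hs01 : s0 < s1) (ha0 : 0 < a0) (ha01 : a0 < a1)
  (g ud : freq d -> R[i]) (hg : is_L2_0 g) (hud : is_L2 ud)
  (phi : R * R -> R)
  (hphiC2 : C2_on (Wint s0 s1 a0 a1) phi)
  (hphi0 : forall x, Wint s0 s1 a0 a1 x -> 0 <= phi x)
  (hphiconv : convex_on (Wint s0 s1 a0 a1) phi)
  (hphiinf : blowup_at_boundary s0 s1 a0 a1 phi) :
  exists2 xbar : R * R, Wint s0 s1 a0 a1 xbar &
    (forall x, Wint s0 s1 a0 a1 x -> (jfun g ud phi xbar <= jfun g ud phi x)%E) /\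
    is_H0 (2 * xbar.1) (Ssol g xbar.1 xbar.2).
Proof.
set W := Wint s0 s1 a0 a1.
set c : R := (2 * (2 * pi) ^+ d)^-1.
have c0 : 0 < c by rewrite invr_gt0; apply: mulr_gt0 => //; apply: exprn_gt0; apply: mulr_gt0 => //; exact: pi_gt0.
pose term k (y : R * R) := sqmod (Ssol g y.1 y.2 k - ud k).
pose L (y : R * R) := l2norm2 (fun k => Ssol g y.1 y.2 k - ud k).
pose S y := fine (L y).
have term0 : forall k y, 0 <= term k y by move=> k y; exact: sqmod_ge0.
have LS : forall y, W y -> L y = (S y)%:E.
  move=> y [_ /andP[hy _]]; rewrite /S fineK// ge0_fin_numE.
    by apply: L2_sub => //; [exact: lt_trans ha0 hy | case: hg].
  by apply: esum_ge0 => k _; rewrite lee_fin; exact: sqmod_ge0.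
have S0 : forall y, W y -> 0 <= S y.
  move=> y Wy; rewrite -lee_fin -LS//; apply: esum_ge0 => k _; rewrite lee_fin; exact: sqmod_ge0.
pose J y := c * S y + phi y.
have jJ : forall y, W y -> jfun g ud phi y = (J y)%:E.
  by move=> y Wy; rewrite /jfun -/(L y) LS// -EFinM -EFinD.
have JS : forall y, W y -> phi y <= J y.
  by move=> y Wy; rewrite /J lerDr; apply: mulr_ge0; [lra | exact: S0].
pose xc : R * R := ((s0 + s1) / 2, (a0 + a1) / 2).
have Wxc : W xc by rewrite /W /Wint /=; split; apply/andP; split; lra.
have [del del0 hdel] := hphiinf (J xc).
have [dl [dl0 dl1 dl2 dl3]] : exists dl : R, [/\ 0 < dl, dl <= del, dl <= (s1 - s0) / 4 & dl <= (a1 - a0) / 4].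
  pose m := Num.min del (Num.min ((s1 - s0) / 4) ((a1 - a0) / 4)).
  exists m; split.
  - by rewrite /m !lt_min del0 /=; apply/andP; split; lra.
  - by rewrite /m ge_min lexx.
  - by rewrite /m !ge_min lexx orbT.
  - by rewrite /m !ge_min lexx !orbT.
pose K := `[s0 + dl, s1 - dl] `*` `[a0 + dl, a1 - dl].
have cK : compact K by apply: compact_setX; exact: segment_compact.
have KW : forall y, K y -> W y.
  move=> [y1 y2]; rewrite /K /= !in_itv /= => -[/andP[? ?] /andP[? ?]].
  by rewrite /W /Wint /=; split; apply/andP; split; lra.
have Kxc : K xc by rewrite /K /xc /= !in_itv /=; split; apply/andP; split; lra.
have notK : forall y, W y -> ~ K y -> J xc <= J y.
  move=> [y1 y2] Wy nK; apply: le_trans (JS _ Wy); apply: hdel => //.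
  move: Wy nK; rewrite /W /Wint /K /= !in_itv /= => -[/andP[? ?] /andP[? ?]] nK.
  have [h|h] := ltP y1 (s0 + dl); first by left; lra.
  have [h'|h'] := ltP (s1 - dl) y1; first by right; left; lra.
  have [h''|h''] := ltP y2 (a0 + dl); first by right; right; left; lra.
  have [h'''|h'''] := ltP (a1 - dl) y2; first by right; right; right; lra.
  by exfalso; apply: nK; split; apply/andP; split.
pose E := J @` K.
have hinf : has_inf E.
  split; first by exists (J xc), xc.
  by exists 0 => _ [y Ky <-]; apply: le_trans (JS _ (KW _ Ky)); exact: hphi0 (KW _ Ky).
pose m := inf E.
have mle : forall y, K y -> m <= J y.
  by move=> y Ky; apply: ge_inf; [case: hinf | exists y].
pose B (e : R) := [set y | K y /\ J y < m + e].
pose F := filter_from [set e : R | 0 < e] B.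
have PF : ProperFilter F.
  apply: filter_from_proper; last first.
    move=> e e0; have [_ [y Ky <-] hy] := inf_adherent e0 hinf.
    by exists y; split.
  apply: filter_from_filter; first by exists 1; rewrite /= ltr01.
  move=> e1 e2 e10 e20; exists (Num.min e1 e2); first by rewrite /= lt_min e10 e20.
  move=> y [Ky hy]; split; split => //; apply: (lt_le_trans hy); rewrite lerD2l ge_min lexx ?orbT //.
have FK : F K by exists 1; [rewrite /= ltr01 | move=> y []].
have [xbar [Kxbar clxbar]] := cK F PF FK.
have Wxbar := KW _ Kxbar.
have xb1 : 0 < xbar.1 by move: Wxbar => [/andP[h _] _]; exact: lt_trans hs0 h.
have xb2 : 0 < xbar.2 by move: Wxbar => [_ /andP[h _]]; exact: lt_trans ha0 h.
have Jbar : J xbar <= m.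
  apply/ler_addgt0Pr => e e0.
  pose e' := e / (c + 2).
  have e'0 : 0 < e' by apply: divr_gt0; lra.
  have ee' : (c + 2) * e' = e by rewrite /e' mulrC -mulrA mulVf ?mulr1 // gt_eqF //; lra.
  have key : forall A : set (freq d), finite_set A ->
      c * (\sum_(k <- finmap.enum_fset (fset_set A)) term k xbar) <= m + (c + 2) * e' - phi xbar.
    move=> A finA.
    have N1 := sum_lsc (finmap.enum_fset (fset_set A)) (fun k => @term_cont R d g ud k xbar xb1 xb2) e'0.
    have N2 := convex_lsc hphiconv hphi0 Wxbar e'0.
    have FB : F (B e') by exists e'.
    have [y [[Ky Jy] [h1 h2]]] := clxbar _ _ FB (filterI N1 N2).
    have Wy := KW _ Ky.
    have hSy : \sum_(k <- finmap.enum_fset (fset_set A)) term k y <= S y.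
      rewrite -lee_fin -LS// -fsbig_finite// -fsumEFin//.
      by apply: ereal_sup_ubound; exists A.
    move: Jy; rewrite /J => Jy.
    have h1' : c * (\sum_(k <- finmap.enum_fset (fset_set A)) term k xbar) <= c * S y + c * e'.
      rewrite -mulrDr; apply: ler_wpM2l; lra.
    lra.
  have hL : (L xbar <= ((m + (c + 2) * e' - phi xbar) / c)%:E)%E.
    apply: ge_ereal_sup => _ [A [finA _] <-].
    rewrite fsumEFin// lee_fin ler_pdivlMr// mulrC fsbig_finite//.
    exact: key.
  move: hL; rewrite LS// lee_fin ler_pdivlMr// => hL.
  rewrite -ee' /J; lra.
exists xbar => //; split; last exact: H0_Ssol.
move=> x Wx; rewrite !jJ// lee_fin.
have [Kx|nKx] := pselect (K x); first exact: le_trans Jbar (mle x Kx).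
exact: le_trans Jbar (le_trans (mle xc Kxc) (notK x Wx nKx)).
Qed.
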